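(* Consider, under stochastic mass-action kinetics, the reaction networks W3: $S_1\underset{\beta}{\overset{\alpha}{\rightleftharpoons}}S_2$, $2S_1\underset{\lambda_2}{\overset{\lambda_1}{\rightleftharpoons}}2S_2$, and W4: $2S_1\underset{\lambda_5}{\overset{\lambda_3}{\rightleftharpoons}}S_1+S_2$, $2S_1\underset{\lambda_2}{\overset{\lambda_1}{\rightleftharpoons}}2S_2$. For each of them and every positive rate vector $\kappa$, $(\mathcal{G},\kappa)$ has product-form stationary distribution if and only if $(\mathcal{G},\kappa)$ is complex balanced.
   Context: Stochastic mass-action kinetics: reaction $\nu\to\nu'$ with rate $\kappa$ moves state $x\in\mathbb{Z}^2_{\ge0}$ to $x+\nu'-\nu$ with intensity $\kappa\frac{x!}{(x-\nu)!}\mathbf{1}_{x\ge\nu}$, $z!=z_1!z_2!$. $(\mathcal{G},\kappa)$ has product-form stationary distribution if there are $f_1,f_2:\mathbb{Z}_{\ge0}\to\mathbb{R}_{>0}$ such that on every positive recurrent irreducible component $\Gamma$ (nonempty set closed under reachability with every state reachable from every other) the stationary distribution is $\pi_\Gamma(x)=Z_\Gamma^{-1}f_1(x_1)f_2(x_2)$. $(\mathcal{G},\kappa)$ is complex balanced if there is $c\in\mathbb{R}^2_{>0}$ such that for every complex $\eta$, $\sum_{\nu\to\eta}\kappa_{\nu\to\eta}c^\nu=\sum_{\eta\to\nu'}\kappa_{\eta\to\nu'}c^\eta$. *)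

(* Defs.v *)
From HB Require Import structures.
From mathcomp Require Import all_boot all_order all_algebra.
From mathcomp Require Import reals.
From Stdlib Require Import Relation_Operators.
Set Implicit Arguments. Unset Strict Implicit. Unset Printing Implicit Defensive.
Import Order.TTheory GRing.Theory Num.Theory.
Local Open Scope ring_scope.

Notation state := (nat * nat)%type.

(* A (rated) reaction network: a list of reactions (nu, nu', kappa) meaning
   nu -> nu' with rate constant kappa. *)
Definition network (R : realType) := seq (state * state * R).

Definition leS (nu x : state) : bool := ((nu.1 <= x.1) && (nu.2 <= x.2))%N.

(* x + nu' - nu (only used when nu <= x) *)
Definition shiftS (x nu nu' : state) : state :=
  ((x.1 - nu.1 + nu'.1)%N, (x.2 - nu.2 + nu'.2)%N).

(* mass-action intensity  kappa * x!/(x-nu)! * 1_{x >= nu};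
   the falling factorial n ^_ m is 0 when m > n. *)
Definition intensity (R : realType) (kappa : R) (nu x : state) : R :=
  kappa * ((x.1 ^_ nu.1) * (x.2 ^_ nu.2))%:R.

Definition rate (R : realType) (N : network R) (x y : state) : R :=
  if x == y then 0 else
  \sum_(r <- N | (shiftS x r.1.1 r.1.2 == y)) intensity r.2 r.1.1 x.

Definition step (R : realType) (N : network R) (x y : state) : Prop :=
  exists r, r \in N /\ 0 < intensity r.2 r.1.1 x /\ y = shiftS x r.1.1 r.1.2.

Definition reach (R : realType) (N : network R) : state -> state -> Prop :=
  clos_refl_trans state (@step R N).

(* A positive recurrent irreducible component, given by a duplicate-free
   enumeration s: nonempty, closed under
   reachability, every state reachable from every other, and finite. *)
Definition pr_component (R : realType) (N : network R) (s : seq state) : Prop :=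
  [/\ s != [::], uniq s,
      (forall x y, x \in s -> reach N x y -> y \in s) &
      (forall x y, x \in s -> y \in s -> reach N x y)].

Definition stationary (R : realType) (N : network R) (s : seq state)
  (pi : state -> R) : Prop :=
  [/\ (forall x, x \in s -> 0 <= pi x),
      \sum_(x <- s) pi x = 1 &
      (forall y, y \in s ->
         \sum_(x <- s) pi x * rate N x y = pi y * \sum_(z <- s) rate N y z)].

Definition has_product_form (R : realType) (N : network R) : Prop :=
  exists f1 f2 : nat -> R,
    [/\ (forall n, 0 < f1 n), (forall n, 0 < f2 n) &
        forall s, pr_component N s ->
        forall pi, stationary N s pi ->
        forall x, x \in s ->
          pi x = f1 x.1 * f2 x.2 / \sum_(y <- s) f1 y.1 * f2 y.2].

Definition monom (R : realType) (c : R * R) (nu : state) : R :=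
  c.1 ^+ nu.1 * c.2 ^+ nu.2.

Definition complex_balanced (R : realType) (N : network R) : Prop :=
  exists c : R * R, [/\ 0 < c.1, 0 < c.2 &
    forall eta : state,
      \sum_(r <- N | r.1.2 == eta) r.2 * monom c r.1.1 =
      \sum_(r <- N | r.1.1 == eta) r.2 * monom c eta].

Definition W3 (R : realType) (alpha beta l1 l2 : R) : network R :=
  [:: ((1,0)%N, (0,1)%N, alpha); ((0,1)%N, (1,0)%N, beta);
      ((2,0)%N, (0,2)%N, l1); ((0,2)%N, (2,0)%N, l2)].

Definition W4 (R : realType) (l3 l5 l1 l2 : R) : network R :=
  [:: ((2,0)%N, (1,1)%N, l3); ((1,1)%N, (2,0)%N, l5);
      ((2,0)%N, (0,2)%N, l1); ((0,2)%N, (2,0)%N, l2)].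

(* Main.v *)
Require Import Defs.
From HB Require Import structures.
From mathcomp Require Import all_boot all_order all_algebra.
From mathcomp Require Import reals ring lra zify.
From Stdlib Require Import Relation_Operators.
Set Implicit Arguments. Unset Strict Implicit. Unset Printing Implicit Defensive.
Import Order.TTheory GRing.Theory Num.Theory.
Local Open Scope ring_scope.

Section Gen.
Variable R : realType.

Lemma intensity_ge0 (k : R) nu x : 0 <= k -> 0 <= intensity k nu x.
Proof. by move=> hk; rewrite /intensity mulr_ge0 // ler0n. Qed.

Lemma rate_ge0 (N : network R) x y :
  (forall r, r \in N -> 0 <= r.2) -> 0 <= rate N x y.
Proof.
move=> hN; rewrite /rate; case: (x == y) => //.
rewrite big_seq_cond; apply: sumr_ge0 => r /andP[rN _].
exact: intensity_ge0 (hN r rN).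
Qed.

Lemma mem_cons_r (T : eqType) (a z : T) s : z \in s -> z \in a :: s.
Proof. by move=> h; rewrite in_cons h orbT. Qed.

Lemma sum_pos_mem (T : eqType) (s : seq T) (P : pred T) (F : T -> R) r :
  (forall z, z \in s -> 0 <= F z) -> r \in s -> P r -> 0 < F r ->
  0 < \sum_(z <- s | P z) F z.
Proof.
elim: s => [//|a s IH] hF; rewrite in_cons big_cons => /orP[/eqP<- Pr Fr|rs Pr Fr].
  rewrite Pr; apply: ltr_wpDr => //; rewrite big_seq_cond; apply: sumr_ge0.
  by move=> z /andP[zs _]; apply: hF; rewrite in_cons zs orbT.
have IH' := IH (fun z zs => hF z (mem_cons_r a zs)) rs Pr Fr.
case: (P a) => //; apply: ltr_wpDl => //; apply: hF; exact: mem_head.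
Qed.

Lemma step_rate (N : network R) a b :
  (forall r, r \in N -> 0 <= r.2) -> step N a b -> a != b -> 0 < rate N a b.
Proof.
move=> hN [r [rN [hi ->]]] hab; rewrite /rate (negbTE hab).
apply: (sum_pos_mem _ rN) => //.
by move=> z zN; exact: intensity_ge0 (hN z zN).
Qed.

Lemma sum_eq0_mem (T : eqType) (s : seq T) (F : T -> R) x :
  (forall z, z \in s -> 0 <= F z) -> \sum_(z <- s) F z = 0 -> x \in s -> F x = 0.
Proof.
elim: s => [//|a s IH] hF; rewrite big_cons => hs.
have ha : 0 <= F a by apply: hF; exact: mem_head.
have hr : 0 <= \sum_(z <- s) F z.
  rewrite big_seq; apply: sumr_ge0 => z zs; apply: hF; by rewrite in_cons zs orbT.
have [Fa0 Fs0] : F a = 0 /\ \sum_(z <- s) F z = 0.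
  split; apply/eqP; rewrite eq_le; apply/andP; split => //; lra.
rewrite in_cons => /orP[/eqP->//|xs].
exact: IH (fun z zs => hF z (mem_cons_r a zs)) Fs0 xs.
Qed.

Lemma seq_max (T : eqType) (s : seq T) (h : T -> R) :
  s != [::] -> exists2 y, y \in s & forall x, x \in s -> h x <= h y.
Proof.
elim: s => [//|a s IH] _.
case: (eqVneq s [::]) => [->|ne].
  by exists a; rewrite ?mem_head // => x; rewrite inE => /eqP->.
have [y ys hy] := IH ne.
case: (leP (h a) (h y)) => hay.
  exists y; first by rewrite in_cons ys orbT.
  by move=> x; rewrite in_cons => /orP[/eqP->//|]; exact: hy.
exists a; first exact: mem_head.
move=> x; rewrite in_cons => /orP[/eqP->//|xs].
by apply: le_trans (hy x xs) _; exact: ltW.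
Qed.

Lemma stat_unique (N : network R) (p : state -> R) :
  (forall r, r \in N -> 0 <= r.2) ->
  (forall x, 0 < p x) ->
  (forall x y, p x * rate N x y = p y * rate N y x) ->
  forall s, pr_component N s -> forall pi, stationary N s pi ->
  forall x, x \in s -> pi x = p x / \sum_(y <- s) p y.
Proof.
move=> hN hp hdb s [sne suniq sclos sirr] pi [pi0 pi1 pibal].
pose h x := pi x / p x.
have hpx x : p x != 0 by rewrite gt_eqF.
have piE x : pi x = h x * p x by rewrite /h divfK.
have key y : y \in s -> \sum_(x <- s) (h y - h x) * rate N y x = 0.
  move=> ys; have := pibal y ys.
  have -> : \sum_(x <- s) pi x * rate N x y = p y * \sum_(x <- s) h x * rate N y x.
    rewrite mulr_sumr; apply: eq_bigr => x _.
    by rewrite piE -mulrA hdb; ring.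
  rewrite piE -mulrA mulrCA => /(mulfI (hpx y)) e.
  under eq_bigr do rewrite mulrBl.
  by rewrite sumrB -mulr_sumr e subrr.
have [y0 y0s hy0] := seq_max h sne.
have prop a b : a \in s -> h a = h y0 -> step N a b -> h b = h y0.
  move=> as_ ha st; case: (eqVneq a b) => [<-//|nab].
  have bs : b \in s by apply: (sclos a) => //; exact: rt_step.
  have hF : forall z, z \in s -> 0 <= (h a - h z) * rate N a z.
    by move=> z zs; rewrite mulr_ge0 ?rate_ge0 // subr_ge0 ha hy0.
  move: (sum_eq0_mem hF (key a as_) bs) => /eqP.
  rewrite mulf_eq0 (gt_eqF (step_rate hN st nab)) orbF subr_eq0 => /eqP.
  by rewrite ha.
have allm x : x \in s -> h x = h y0.
  move=> xs; have r := sirr y0 x y0s xs.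
  suff H : forall a b, reach N a b -> a \in s -> h a = h y0 -> h b = h y0.
    exact: H r y0s erefl.
  move=> a b; elim.
  - by move=> u v st us hu; exact: prop st.
  - by [].
  - move=> u v w ruv IH1 rvw IH2 us hu.
    have vs : v \in s by exact: sclos ruv.
    exact: IH2 vs (IH1 us hu).
have pim x : x \in s -> pi x = h y0 * p x by move=> xs; rewrite piE allm.
have : \sum_(y <- s) pi y = h y0 * \sum_(y <- s) p y.
  by rewrite mulr_sumr big_seq [RHS]big_seq; apply: eq_bigr => z zs; rewrite pim.
rewrite pi1 => e x xs.
have Sne : \sum_(y <- s) p y != 0.
  by apply/eqP => S0; move: e; rewrite S0 mulr0; apply/eqP; exact: oner_neq0.
rewrite pim // (_ : h y0 = (\sum_(y <- s) p y)^-1); first by rewrite mulrC.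
by apply: (mulIf Sne); rewrite mulVf // -e.
Qed.

Definition fP (a : R) (n : nat) : R := a ^+ n / (n`!)%:R.
Definition pp (c : R * R) (x : state) : R := fP c.1 x.1 * fP c.2 x.2.

Lemma fP_gt0 a n : 0 < a -> 0 < fP a n.
Proof. by move=> ha; rewrite /fP divr_gt0 ?exprn_gt0 // ltr0n fact_gt0. Qed.

Lemma fP_ff a w m : fP a (w + m) * ((w + m) ^_ m)%:R = a ^+ m * fP a w.
Proof.
rewrite /fP -(ffact_fact (leq_addl w m)) addnK natrM.
have h1 : (w`!)%:R != 0 :> R by rewrite pnatr_eq0 -lt0n fact_gt0.
have h2 : ((w + m) ^_ m)%:R != 0 :> R by rewrite pnatr_eq0 -lt0n ffact_gt0 leq_addl.
rewrite exprD; field; by rewrite h1 h2.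
Qed.

Lemma core c k w1 w2 n1 n2 :
  pp c (w1 + n1, w2 + n2)%N * intensity k (n1, n2) (w1 + n1, w2 + n2)%N =
  k * monom c (n1, n2) * (fP c.1 w1 * fP c.2 w2).
Proof.
rewrite /pp /intensity /monom /= natrM.
transitivity (k * ((fP c.1 (w1 + n1) * ((w1 + n1) ^_ n1)%:R) *
                   (fP c.2 (w2 + n2) * ((w2 + n2) ^_ n2)%:R))); first ring.
rewrite !fP_ff; ring.
Qed.

Lemma int0 (k : R) nu x : ~~ leS nu x -> intensity k nu x = 0.
Proof.
case: nu x => n1 n2 [x1 x2]; rewrite /leS /intensity /= negb_and -!ltnNge.
by case/orP => h; rewrite (ffact_small h) ?mul0n ?muln0; exact: mulr0.
Qed.

Lemma shift_back nu nu' x y : leS nu x -> shiftS x nu nu' = y ->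
  leS nu' y /\ shiftS y nu' nu = x.
Proof.
move=> hl <-; move: hl; case: nu nu' x => n1 n2 [m1 m2] [x1 x2].
rewrite /leS /shiftS /= => /andP[h1 h2].
split; first by apply/andP; split; apply: leq_addl.
by rewrite !addnK !subnK.
Qed.

Lemma if00 (b : bool) : (if b then 0 else 0) = 0 :> R.
Proof. by case: b. Qed.

Lemma pair_db c nu nu' (k k' : R) (hk : k * monom c nu = k' * monom c nu') x y :
  pp c x * (if shiftS x nu nu' == y then intensity k nu x else 0) =
  pp c y * (if shiftS y nu' nu == x then intensity k' nu' y else 0).
Proof.
case hx: (leS nu x); case hy: (leS nu' y).
- case: (eqVneq (shiftS x nu nu') y) => [e|ne].
    have [_ e'] := shift_back hx e; rewrite e' eqxx.
    move: hx e e'; clear hy; case: nu nu' hk x y => n1 n2 [m1 m2] hk [x1 x2] [y1 y2].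
    rewrite /leS /shiftS /= => /andP[h1 h2] [<- <-] _.
    rewrite -{1 2}(subnK h1) -{1 2}(subnK h2) !core; congr (_ * _) => //.
  case: eqP => [e|_]; last by rewrite !mulr0.
  by have [_ e'] := shift_back hy e; rewrite e' eqxx in ne.
  rewrite [in RHS]int0 ?hy // if00.
  rewrite mulr0; case: eqP => [e|_]; last by rewrite mulr0.
  by have [e' _] := shift_back hx e; rewrite e' in hy.
- rewrite [in LHS]int0 ?hx // if00.
  rewrite mulr0; case: eqP => [e|_]; last by rewrite mulr0.
  by have [e' _] := shift_back hy e; rewrite e' in hx.
- rewrite !int0 ?hx ?hy //.
  by rewrite !if00 !mulr0.
Qed.

Definition lev (k : nat) : seq state := [seq (i, k - i)%N | i <- iota 0 k.+1].

Lemma mem_lev k x : (x \in lev k) = (x.1 + x.2 == k)%N.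
Proof.
apply/mapP/eqP => [[i]|e].
  by rewrite mem_iota => /andP[_ hi] ->; rewrite /= subnKC.
exists x.1; first by rewrite mem_iota /= -e ltnS leq_addr.
by case: x e => x1 x2 /= <-; rewrite addKn.
Qed.

Lemma lev_ne k : lev k != [::]. Proof. by []. Qed.

Lemma lev_uniq k : uniq (lev k).
Proof.
rewrite map_inj_uniq ?iota_uniq //; by move=> i j [].
Qed.

Definition conserv (N : network R) :=
  forall r, r \in N -> (r.1.1.1 + r.1.1.2 = r.1.2.1 + r.1.2.2)%N.

Lemma step_level (N : network R) x y : conserv N -> step N x y ->
  (y.1 + y.2 = x.1 + x.2)%N.
Proof.
move=> hc [r [rN [hi ->]]].
have hl : leS r.1.1 x.
  by apply: contraT => /(int0 r.2) e; rewrite e ltxx in hi.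
have := hc r rN; move: hl; rewrite /leS /shiftS /=.
case: r {rN hi} => [[[n1 n2] [m1 m2]] k] /= /andP[h1 h2] e; lia.
Qed.

Lemma lev_closed (N : network R) k x y : conserv N -> x \in lev k -> reach N x y ->
  y \in lev k.
Proof.
move=> hc xs r; elim: r xs => //.
- by move=> u v st; rewrite !mem_lev (step_level hc st).
- by move=> u v w _ IH1 _ IH2 /IH1 /IH2.
Qed.

Lemma lev_pr (N : network R) k : conserv N ->
  (forall x y, x \in lev k -> y \in lev k -> reach N x y) -> pr_component N (lev k).
Proof.
move=> hc hr; split; [exact: lev_ne | exact: lev_uniq | | exact: hr].
by move=> x y; exact: lev_closed.
Qed.

Lemma sum_pos s (w : state -> R) : s != [::] -> (forall x, x \in s -> 0 < w x) ->
  0 < \sum_(y <- s) w y.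
Proof.
case: s => [//|a s] _ wp; rewrite big_cons.
apply: ltr_wpDr; last by apply: wp; exact: mem_head.
by rewrite big_seq; apply: sumr_ge0 => z zs; apply/ltW/wp; rewrite in_cons zs orbT.
Qed.

Lemma stat_of_w (N : network R) s (w : state -> R) :
  s != [::] -> (forall x, x \in s -> 0 < w x) ->
  (forall y, y \in s -> \sum_(x <- s) w x * rate N x y = w y * \sum_(z <- s) rate N y z) ->
  stationary N s (fun x => w x / \sum_(y <- s) w y).
Proof.
move=> sne wp bal.
have Sp : 0 < \sum_(y <- s) w y.
  case: s sne wp {bal} => [//|a s] _ wp; rewrite big_cons.
  apply: ltr_wpDr; last by apply: wp; exact: mem_head.
  by rewrite big_seq; apply: sumr_ge0 => z zs; apply/ltW/wp; rewrite in_cons zs orbT.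
split.
- by move=> x xs; rewrite divr_ge0 // ltW // wp.
- by rewrite -mulr_suml mulfV // gt_eqF.
- move=> y ys; rewrite -[RHS]mulrA [_^-1 * _]mulrC [RHS]mulrA -bal //.
  by rewrite mulr_suml; apply: eq_bigr => x _; rewrite mulrAC.
Qed.

Lemma pf_level (N : network R) (f1 f2 : nat -> R) s (w : state -> R) :
  (forall s, pr_component N s -> forall pi, stationary N s pi -> forall x, x \in s ->
     pi x = f1 x.1 * f2 x.2 / \sum_(y <- s) f1 y.1 * f2 y.2) ->
  pr_component N s -> (forall x, x \in s -> 0 < w x) ->
  (forall y, y \in s -> \sum_(x <- s) w x * rate N x y = w y * \sum_(z <- s) rate N y z) ->
  exists2 K, K != 0 & forall x, x \in s -> f1 x.1 * f2 x.2 = K * w x.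
Proof.
move=> H pc wp bal; have [sne _ _ _] := pc.
have st := stat_of_w sne wp bal.
have e x : x \in s -> w x / \sum_(y <- s) w y =
    f1 x.1 * f2 x.2 / \sum_(y <- s) f1 y.1 * f2 y.2 := H s pc _ st x.
have Sp := sum_pos sne wp.
move: e Sp; set S := \sum_(y <- s) w y; set G := \sum_(y <- s) f1 y.1 * f2 y.2 => e Sp.
have [x0 x0s] : exists x0, x0 \in s.
  by move: sne; case: (s) => [//|x0 s'] _; exists x0; exact: mem_head.
have Gne : G != 0.
  apply/eqP => G0; have := e x0 x0s; rewrite G0 invr0 mulr0 => /eqP.
  by rewrite (gt_eqF (divr_gt0 (wp x0 x0s) Sp)).
exists (G / S); first by rewrite mulf_eq0 invr_eq0 negb_or Gne (gt_eqF Sp).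
move=> x xs; rewrite -[LHS](divfK Gne) -e //; ring.
Qed.
End Gen.
Lemma levP' k x : reflect (exists2 i, (i <= k)%N & x = (i, k - i)%N) (x \in lev k).
Proof.
apply: (iffP mapP) => [[i]|[i hi ->]]; last by exists i => //; rewrite mem_iota.
by rewrite mem_iota => /andP[_ hi] ->; exists i.
Qed.

Ltac natev := repeat match goal with |- context [ GRing.natmul (GRing.one _) ?n ] =>
  let v := eval vm_compute in n in progress change n with v end.
Ltac pos := repeat first [assumption | exact: ltr01 | (rewrite ltr0n //) | apply: addr_gt0 | apply: mulr_gt0 | apply: exprn_gt0].

Section W3s.
Variables (R : realType) (a b l1 l2 : R).
Hypotheses (ha : 0 < a) (hb : 0 < b) (hl1 : 0 < l1) (hl2 : 0 < l2).
Lemma cbW3 c : a * monom c (1,0)%N = b * monom c (0,1)%N ->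
  l1 * monom c (2,0)%N = l2 * monom c (0,2)%N ->
  forall eta : state,
      \sum_(r <- W3 a b l1 l2 | r.1.2 == eta) r.2 * monom c r.1.1 =
      \sum_(r <- W3 a b l1 l2 | r.1.1 == eta) r.2 * monom c eta.
Proof.
move=> h1 h2 eta; rewrite !big_cons !big_nil.
have [->|n1] := eqVneq eta (1,0)%N; first by rewrite /= !addr0 h1.
have [->|n2] := eqVneq eta (0,1)%N; first by rewrite /= !addr0 h1.
have [->|n3] := eqVneq eta (2,0)%N; first by rewrite /= !addr0 h2.
have [->|n4] := eqVneq eta (0,2)%N; first by rewrite /= !addr0 h2.
by [].
Qed.

Lemma dbW3 c : a * monom c (1,0)%N = b * monom c (0,1)%N ->
  l1 * monom c (2,0)%N = l2 * monom c (0,2)%N ->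
  forall x y, pp c x * rate (W3 a b l1 l2) x y = pp c y * rate (W3 a b l1 l2) y x.
Proof.
move=> h1 h2 x y; rewrite /rate; case: (eqVneq x y) => [->|ne]; first by rewrite /= !mulr0.
rewrite /= [in LHS]big_mkcond [in RHS]big_mkcond !big_cons !big_nil /= !addr0 !mulrDr.
rewrite (pair_db h1 x y) (pair_db (esym h1) x y) (pair_db h2 x y) (pair_db (esym h2) x y).
ring.
Qed.
Definition w31 (x : state) : R :=
  match x.1 with
  | 1%N => b
  | _ => a
  end.

Definition w32 (x : state) : R :=
  match x.1 with
  | 2%N => 2 * a * l2 + 2 * b ^+ 2 + 2 * b * l2
  | 1%N => 4 * a * b + 4 * a * l2 + 4 * b * l1
  | _ => 2 * a ^+ 2 + 2 * a * l1 + 2 * b * l1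
  end.

Definition w33 (x : state) : R :=
  match x.1 with
  | 3%N => 18 * a * b * l2 + 24 * a * l2 ^+ 2 + 6 * b ^+ 3 + 18 * b ^+ 2 * l2 + 12 * b * l1 * l2 + 12 * b * l2 ^+ 2
  | 2%N => 18 * a ^+ 2 * l2 + 18 * a * b ^+ 2 + 54 * a * b * l2 + 36 * a * l1 * l2 + 36 * a * l2 ^+ 2 + 36 * b ^+ 2 * l1 + 72 * b * l1 * l2
  | 1%N => 18 * a ^+ 2 * b + 36 * a ^+ 2 * l2 + 54 * a * b * l1 + 72 * a * l1 * l2 + 18 * b ^+ 2 * l1 + 36 * b * l1 ^+ 2 + 36 * b * l1 * l2
  | _ => 6 * a ^+ 3 + 18 * a ^+ 2 * l1 + 18 * a * b * l1 + 12 * a * l1 ^+ 2 + 12 * a * l1 * l2 + 24 * b * l1 ^+ 2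
  end.


Lemma conservW3 : conserv (W3 a b l1 l2).
Proof. by move=> r; rewrite !inE => /or4P[] /eqP ->. Qed.

Lemma kappaW3 : forall r, r \in W3 a b l1 l2 -> 0 <= r.2.
Proof. by move=> r; rewrite !inE => /or4P[] /eqP -> /=; apply: ltW. Qed.

Lemma w3_down i j : reach (W3 a b l1 l2) (i.+1, j) (i, j.+1).
Proof.
apply: rt_step; exists ((1,0),(0,1),a)%N; split; first by rewrite inE eqxx.
split; last by rewrite /shiftS /= subn1 addn0 subn0 addn1.
by rewrite /intensity /= ffactn1 ffactn0 muln1 mulr_gt0 // ltr0n.
Qed.

Lemma w3_up i j : reach (W3 a b l1 l2) (i, j.+1) (i.+1, j).
Proof.
apply: rt_step; exists ((0,1),(1,0),b)%N; split; first by rewrite !inE eqxx orbT.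
split; last by rewrite /shiftS /= subn1 addn0 subn0 addn1.
by rewrite /intensity /= ffactn1 ffactn0 mul1n mulr_gt0 // ltr0n.
Qed.

Lemma w3_to0 i j : reach (W3 a b l1 l2) (i, j) (0, i + j)%N.
Proof.
elim: i j => [|i IH] j; first exact: rt_refl.
by apply: rt_trans (w3_down i j) _; rewrite addSnnS; exact: IH.
Qed.

Lemma w3_from0 i j : reach (W3 a b l1 l2) (0, i + j)%N (i, j).
Proof.
elim: i j => [|i IH] j; first exact: rt_refl.
by rewrite addSnnS; apply: rt_trans (IH j.+1) (w3_up i j).
Qed.

Lemma irrW3 k x y : x \in lev k -> y \in lev k -> reach (W3 a b l1 l2) x y.
Proof.
rewrite !mem_lev; case: x => x1 x2; case: y => y1 y2 /= /eqP e1 /eqP e2.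
apply: rt_trans (w3_to0 x1 x2) _; rewrite e1 -e2; exact: w3_from0.
Qed.

Lemma bal31 y : y \in lev 1 ->
  \sum_(x <- lev 1) w31 x * rate (W3 a b l1 l2) x y = w31 y * \sum_(z <- lev 1) rate (W3 a b l1 l2) y z.
Proof.
case/levP' => i hi ->.
do 2?[case: i hi => [|i] hi]; last by [].
all: rewrite /lev /= !big_cons !big_nil /rate /= !big_cons !big_nil /= /intensity /w31 /=.
all: natev; ring.
Qed.

Lemma bal32 y : y \in lev 2 ->
  \sum_(x <- lev 2) w32 x * rate (W3 a b l1 l2) x y = w32 y * \sum_(z <- lev 2) rate (W3 a b l1 l2) y z.
Proof.
case/levP' => i hi ->.
do 3?[case: i hi => [|i] hi]; last by [].
all: rewrite /lev /= !big_cons !big_nil /rate /= !big_cons !big_nil /= /intensity /w32 /=.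
all: natev; ring.
Qed.

Lemma bal33 y : y \in lev 3 ->
  \sum_(x <- lev 3) w33 x * rate (W3 a b l1 l2) x y = w33 y * \sum_(z <- lev 3) rate (W3 a b l1 l2) y z.
Proof.
case/levP' => i hi ->.
do 4?[case: i hi => [|i] hi]; last by [].
all: rewrite /lev /= !big_cons !big_nil /rate /= !big_cons !big_nil /= /intensity /w33 /=.
all: natev; ring.
Qed.

Lemma pos31 x : x \in lev 1 -> 0 < w31 x.
Proof. case/levP' => i hi ->; do 2?[case: i hi => [|i] hi]; last by [].
all: rewrite /w31 /=; pos.
Qed.
Lemma pos32 x : x \in lev 2 -> 0 < w32 x.
Proof. case/levP' => i hi ->; do 3?[case: i hi => [|i] hi]; last by [].
all: rewrite /w32 /=; pos.
Qed.
Lemma pos33 x : x \in lev 3 -> 0 < w33 x.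
Proof. case/levP' => i hi ->; do 4?[case: i hi => [|i] hi]; last by [].
all: rewrite /w33 /=; pos.
Qed.


Lemma W3_main : has_product_form (W3 a b l1 l2) <-> complex_balanced (W3 a b l1 l2).
Proof.
split.
- case=> f1 [f2 [_ _ H]].
  have pc k : pr_component (W3 a b l1 l2) (lev k).
    by apply: lev_pr; [exact: conservW3 | exact: irrW3].
  have [K1 K1n e1] := pf_level H (pc 1%N) pos31 bal31.
  have [K2 K2n e2] := pf_level H (pc 2%N) pos32 bal32.
  have [K3 K3n e3] := pf_level H (pc 3%N) pos33 bal33.
  have := e1 (1,0)%N; rewrite mem_lev => /(_ isT) /= E10.
  have := e1 (0,1)%N; rewrite mem_lev => /(_ isT) /= E01.
  have := e2 (2,0)%N; rewrite mem_lev => /(_ isT) /= E20.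
  have := e2 (0,2)%N; rewrite mem_lev => /(_ isT) /= E02.
  have := e3 (2,1)%N; rewrite mem_lev => /(_ isT) /= E21.
  have := e3 (1,2)%N; rewrite mem_lev => /(_ isT) /= E12.
  have E : f1 1%N * f2 0%N * (f1 2%N * f2 1%N) * (f1 0%N * f2 2%N) =
           f1 0%N * f2 1%N * (f1 1%N * f2 2%N) * (f1 2%N * f2 0%N) by ring.
  rewrite E10 E01 E20 E02 E21 E12 /w31 /w32 /w33 /= in E.
  have HB : a ^+ 2 * l2 = b ^+ 2 * l1.
    have Q : 0 < 72 * a ^+ 2 * l2 + 144 * a * l1 * l2 + 72 * b ^+ 2 * l1 + 144 * b * l1 * l2 by pos.
    have : K1 * K2 * K3 * ((72 * a ^+ 2 * l2 + 144 * a * l1 * l2 + 72 * b ^+ 2 * l1 + 144 * b * l1 * l2) *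
             (b ^+ 2 * l1 - a ^+ 2 * l2)) = 0.
      move/eqP: E; rewrite -subr_eq0 => /eqP E.
      rewrite -[RHS]E; ring.
    move/eqP; rewrite !mulf_eq0 (negbTE K1n) (negbTE K2n) (negbTE K3n) (gt_eqF Q) /=.
    by rewrite subr_eq0 => /eqP ->.

  exists (b, a); split => //; apply: cbW3; rewrite /monom /=; first by ring.
  by rewrite expr0 mulr1 mul1r mulrC -HB mulrC.
- case=> c [c1 c2 cb].
  have h1 := cb (0,1)%N; rewrite !big_cons !big_nil /= !addr0 in h1.
  have h2 := cb (0,2)%N; rewrite !big_cons !big_nil /= !addr0 in h2.
  exists (fP c.1), (fP c.2); split; [by move=> n; exact: fP_gt0 | by move=> n; exact: fP_gt0 |].
  move=> s pc pi st x xs.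
  have pp_pos y : 0 < pp c y by rewrite /pp mulr_gt0 // fP_gt0.
  exact: (stat_unique kappaW3 pp_pos (dbW3 h1 h2) pc st xs).
Qed.
End W3s.

Section W4s.
Variables (R : realType) (l3 l5 l1 l2 : R).
Hypotheses (hl3 : 0 < l3) (hl5 : 0 < l5) (hl1 : 0 < l1) (hl2 : 0 < l2).
Local Notation N4 := (W4 l3 l5 l1 l2).

Lemma cbW4 c : l3 * monom c (2,0)%N = l5 * monom c (1,1)%N ->
  l1 * monom c (2,0)%N = l2 * monom c (0,2)%N ->
  forall eta : state,
      \sum_(r <- N4 | r.1.2 == eta) r.2 * monom c r.1.1 =
      \sum_(r <- N4 | r.1.1 == eta) r.2 * monom c eta.
Proof.
move=> h1 h2 eta; rewrite !big_cons !big_nil.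
have [->|n1] := eqVneq eta (2,0)%N; first by rewrite /= !addr0 ?add0r -h1 -h2; ring.
have [->|n2] := eqVneq eta (1,1)%N; first by rewrite /= !addr0 h1.
have [->|n3] := eqVneq eta (0,2)%N; first by rewrite /= !addr0 h2.
by [].
Qed.

Lemma dbW4 c : l3 * monom c (2,0)%N = l5 * monom c (1,1)%N ->
  l1 * monom c (2,0)%N = l2 * monom c (0,2)%N ->
  forall x y, pp c x * rate N4 x y = pp c y * rate N4 y x.
Proof.
move=> h1 h2 x y; rewrite /rate; case: (eqVneq x y) => [->|ne]; first by rewrite /= !mulr0.
rewrite /= [in LHS]big_mkcond [in RHS]big_mkcond !big_cons !big_nil /= !addr0 !mulrDr.
rewrite (pair_db h1 x y) (pair_db (esym h1) x y) (pair_db h2 x y) (pair_db (esym h2) x y).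
ring.
Qed.

Definition w42 (x : state) : R :=
  match x.1 with
  | 2%N => l5 * l2
  | 1%N => 2 * l3 * l2
  | _ => l5 * l1
  end.

Definition w43 (x : state) : R :=
  match x.1 with
  | 3%N => l3 * l2 ^+ 2 + l5 ^+ 2 * l2 + l5 * l2 ^+ 2
  | 2%N => 3 * l3 * l5 * l2 + 3 * l3 * l2 ^+ 2 + 3 * l5 * l1 * l2
  | 1%N => 3 * l3 ^+ 2 * l2 + 3 * l3 * l1 * l2 + 3 * l5 * l1 * l2
  | _ => l3 * l5 * l1 + l3 * l1 * l2 + l5 * l1 ^+ 2
  end.

Definition w44 (x : state) : R :=
  match x.1 with
  | 4%N => 4 * l3 * l5 * l2 ^+ 2 + 4 * l3 * l2 ^+ 3 + 2 * l5 ^+ 3 * l2 + 5 * l5 ^+ 2 * l2 ^+ 2 + 2 * l5 * l1 * l2 ^+ 2 + 2 * l5 * l2 ^+ 3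
  | 3%N => 8 * l3 ^+ 2 * l2 ^+ 2 + 8 * l3 * l5 ^+ 2 * l2 + 20 * l3 * l5 * l2 ^+ 2 + 8 * l3 * l1 * l2 ^+ 2 + 8 * l3 * l2 ^+ 3 + 8 * l5 ^+ 2 * l1 * l2 + 16 * l5 * l1 * l2 ^+ 2
  | 2%N => 12 * l3 ^+ 2 * l5 * l2 + 24 * l3 ^+ 2 * l2 ^+ 2 + 24 * l3 * l5 * l1 * l2 + 24 * l3 * l1 * l2 ^+ 2 + 6 * l5 ^+ 2 * l1 * l2 + 12 * l5 * l1 ^+ 2 * l2 + 12 * l5 * l1 * l2 ^+ 2
  | 1%N => 8 * l3 ^+ 3 * l2 + 16 * l3 ^+ 2 * l1 * l2 + 20 * l3 * l5 * l1 * l2 + 8 * l3 * l1 ^+ 2 * l2 + 8 * l3 * l1 * l2 ^+ 2 + 16 * l5 * l1 ^+ 2 * l2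
  | _ => 2 * l3 ^+ 2 * l5 * l1 + 4 * l3 ^+ 2 * l1 * l2 + 4 * l3 * l5 * l1 ^+ 2 + 4 * l3 * l1 ^+ 2 * l2 + l5 ^+ 2 * l1 ^+ 2 + 2 * l5 * l1 ^+ 3 + 2 * l5 * l1 ^+ 2 * l2
  end.


Lemma conservW4 : conserv N4.
Proof. by move=> r; rewrite !inE => /or4P[] /eqP ->. Qed.

Lemma kappaW4 : forall r, r \in N4 -> 0 <= r.2.
Proof. by move=> r; rewrite !inE => /or4P[] /eqP -> /=; apply: ltW. Qed.

Lemma st3 i j : reach N4 (i.+2, j) (i.+1, j.+1).
Proof.
apply: rt_step; exists ((2,0),(1,1),l3)%N; split; first by rewrite !inE eqxx.
split; last by rewrite /shiftS /=; congr (_, _); lia.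
by rewrite /intensity /= mulr_gt0 // ltr0n muln_gt0 !ffact_gt0.
Qed.

Lemma st5 i j : reach N4 (i.+1, j.+1) (i.+2, j).
Proof.
apply: rt_step; exists ((1,1),(2,0),l5)%N; split; first by rewrite !inE eqxx !orbT.
split; last by rewrite /shiftS /=; congr (_, _); lia.
by rewrite /intensity /= mulr_gt0 // ltr0n muln_gt0 !ffact_gt0.
Qed.

Lemma st1 i j : reach N4 (i.+2, j) (i, j.+2).
Proof.
apply: rt_step; exists ((2,0),(0,2),l1)%N; split; first by rewrite !inE eqxx !orbT.
split; last by rewrite /shiftS /=; congr (_, _); lia.
by rewrite /intensity /= mulr_gt0 // ltr0n muln_gt0 !ffact_gt0.
Qed.

Lemma st2 i j : reach N4 (i, j.+2) (i.+2, j).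
Proof.
apply: rt_step; exists ((0,2),(2,0),l2)%N; split; first by rewrite !inE eqxx !orbT.
split; last by rewrite /shiftS /=; congr (_, _); lia.
by rewrite /intensity /= mulr_gt0 // ltr0n muln_gt0 !ffact_gt0.
Qed.

Lemma down1 i j : reach N4 (i.+1, j) (1, i + j)%N.
Proof.
elim: i j => [|i IH] j; first exact: rt_refl.
by apply: rt_trans (st3 i j) _; rewrite addSnnS; exact: IH.
Qed.

Lemma up1 i j : reach N4 (1, i + j)%N (i.+1, j).
Proof.
elim: i j => [|i IH] j; first exact: rt_refl.
by rewrite addSnnS; apply: rt_trans (IH j.+1) (st5 i j).
Qed.

Lemma hub4 m x : x \in lev m.+2 -> reach N4 x (1, m.+1)%N /\ reach N4 (1, m.+1)%N x.
Proof.
rewrite mem_lev; case: x => [[|i] x2] /= /eqP e.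
  rewrite add0n in e; rewrite e; split.
    exact: rt_trans (st2 0 m) (st3 0 m).
  exact: rt_trans (st5 0 m) (st1 0 m).
have -> : m.+1 = (i + x2)%N by lia.
split; [exact: down1 | exact: up1].
Qed.

Lemma irrW4 m x y : x \in lev m.+2 -> y \in lev m.+2 -> reach N4 x y.
Proof.
move=> /hub4 [hx _] /hub4 [_ hy]; exact: rt_trans hx hy.
Qed.

Lemma bal42 y : y \in lev 2 ->
  \sum_(x <- lev 2) w42 x * rate N4 x y = w42 y * \sum_(z <- lev 2) rate N4 y z.
Proof.
case/levP' => i hi ->.
do 3?[case: i hi => [|i] hi]; last by [].
all: rewrite /lev /= !big_cons !big_nil /rate /= !big_cons !big_nil /= /intensity /w42 /=.
all: natev; ring.
Qed.

Lemma pos42 x : x \in lev 2 -> 0 < w42 x.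
Proof.
case/levP' => i hi ->; do 3?[case: i hi => [|i] hi]; last by [].
all: rewrite /w42 /=; pos.
Qed.

Lemma bal43 y : y \in lev 3 ->
  \sum_(x <- lev 3) w43 x * rate N4 x y = w43 y * \sum_(z <- lev 3) rate N4 y z.
Proof.
case/levP' => i hi ->.
do 4?[case: i hi => [|i] hi]; last by [].
all: rewrite /lev /= !big_cons !big_nil /rate /= !big_cons !big_nil /= /intensity /w43 /=.
all: natev; ring.
Qed.

Lemma pos43 x : x \in lev 3 -> 0 < w43 x.
Proof.
case/levP' => i hi ->; do 4?[case: i hi => [|i] hi]; last by [].
all: rewrite /w43 /=; pos.
Qed.

Lemma bal44 y : y \in lev 4 ->
  \sum_(x <- lev 4) w44 x * rate N4 x y = w44 y * \sum_(z <- lev 4) rate N4 y z.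
Proof.
case/levP' => i hi ->.
do 5?[case: i hi => [|i] hi]; last by [].
all: rewrite /lev /= !big_cons !big_nil /rate /= !big_cons !big_nil /= /intensity /w44 /=.
all: natev; ring.
Qed.

Lemma pos44 x : x \in lev 4 -> 0 < w44 x.
Proof.
case/levP' => i hi ->; do 5?[case: i hi => [|i] hi]; last by [].
all: rewrite /w44 /=; pos.
Qed.


Lemma W4_main : has_product_form N4 <-> complex_balanced N4.
Proof.
split.
- case=> f1 [f2 [_ _ H]].
  have pc m : pr_component N4 (lev m.+2).
    by apply: lev_pr; [exact: conservW4 | exact: irrW4].
  have [K2 K2n e2] := pf_level H (pc 0%N) pos42 bal42.
  have [K3 K3n e3] := pf_level H (pc 1%N) pos43 bal43.
  have [K4 K4n e4] := pf_level H (pc 2%N) pos44 bal44.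
  have := e3 (2,1)%N; rewrite mem_lev => /(_ isT) /= E21.
  have := e4 (1,3)%N; rewrite mem_lev => /(_ isT) /= E13.
  have := e2 (0,2)%N; rewrite mem_lev => /(_ isT) /= E02.
  have := e4 (2,2)%N; rewrite mem_lev => /(_ isT) /= E22.
  have := e2 (1,1)%N; rewrite mem_lev => /(_ isT) /= E11.
  have := e3 (0,3)%N; rewrite mem_lev => /(_ isT) /= E03.
  have E : f1 2%N * f2 1%N * (f1 1%N * f2 3%N) * (f1 0%N * f2 2%N) =
           f1 2%N * f2 2%N * (f1 1%N * f2 1%N) * (f1 0%N * f2 3%N) by ring.
  rewrite E21 E13 E02 E22 E11 E03 /w42 /w43 /w44 /= in E.
  have HB : l3 ^+ 2 * l2 = l5 ^+ 2 * l1.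
    have Q : 0 < (48 * l3 ^+ 2 * l5 * l1 * l2 ^+ 2 + 48 * l3 ^+ 2 * l1 * l2 ^+ 3 + 96 * l3 * l5 * l1 ^+ 2 * l2 ^+ 2 + 48 * l3 * l1 ^+ 2 * l2 ^+ 3 + 48 * l5 * l1 ^+ 3 * l2 ^+ 2) by pos.
    have : K2 * K3 * K4 * ((48 * l3 ^+ 2 * l5 * l1 * l2 ^+ 2 + 48 * l3 ^+ 2 * l1 * l2 ^+ 3 + 96 * l3 * l5 * l1 ^+ 2 * l2 ^+ 2 + 48 * l3 * l1 ^+ 2 * l2 ^+ 3 + 48 * l5 * l1 ^+ 3 * l2 ^+ 2) * (l5 ^+ 2 * l1 - l3 ^+ 2 * l2)) = 0.
      move/eqP: E; rewrite -subr_eq0 => /eqP E.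
      rewrite -[RHS]E; ring.
    move/eqP; rewrite !mulf_eq0 (negbTE K2n) (negbTE K3n) (negbTE K4n) (gt_eqF Q) /=.
    by rewrite subr_eq0 => /eqP ->.
  exists (l5, l3); split => //; apply: cbW4; rewrite /monom /=; first by ring.
  by rewrite expr0 mulr1 mul1r mulrC -HB mulrC.
- case=> c [c1 c2 cb].
  have h1 := cb (1,1)%N; rewrite !big_cons !big_nil /= !addr0 ?add0r in h1.
  have h2 := cb (0,2)%N; rewrite !big_cons !big_nil /= !addr0 ?add0r in h2.
  exists (fP c.1), (fP c.2); split; [by move=> n; exact: fP_gt0 | by move=> n; exact: fP_gt0 |].
  move=> s pc pi st x xs.
  have pp_pos y : 0 < pp c y by rewrite /pp mulr_gt0 // fP_gt0.
  exact: (stat_unique kappaW4 pp_pos (dbW4 h1 h2) pc st xs).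
Qed.
End W4s.

Theorem lemma4p3 (R : realType) :
  (forall alpha beta l1 l2 : R, 0 < alpha -> 0 < beta -> 0 < l1 -> 0 < l2 ->
     has_product_form (W3 alpha beta l1 l2) <->
     complex_balanced (W3 alpha beta l1 l2)) /\
  (forall l3 l5 l1 l2 : R, 0 < l3 -> 0 < l5 -> 0 < l1 -> 0 < l2 ->
     has_product_form (W4 l3 l5 l1 l2) <->
     complex_balanced (W4 l3 l5 l1 l2)).
Proof.
split.
- by move=> alpha beta l1 l2 ha hb h1 h2; exact: W3_main.
- by move=> l3 l5 l1 l2 h3 h5 h1 h2; exact: W4_main.
Qed.
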